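(* Let $x_0\in\mathbb{R}\cup\{+\infty\}$, $T<x_0$, $I:=[T,x_0)$, and let $\phi_1,\phi_2\in AC^1(I)$ satisfy $\phi_2(x)=o(\phi_1(x))$ as $x\to x_0$, $\phi_1(x)\neq0$, $\phi_2(x)\neq0$ and $W(x):=W(\phi_1,\phi_2;x)\neq0$ for all $x\in I$. Let $\phi\in\mathrm{span}(\phi_1,\phi_2)$ be strictly positive on a left-sided neighborhood $J\subset I$ of $x_0$, and consider the factorization $$L[u]=\frac{W(x)}{\phi(x)}\Big[\frac{\phi(x)^2}{W(x)}\Big(\frac{u}{\phi(x)}\Big)'\Big]'\quad\text{on }J.$$ This factorization is canonical of type (I) at $x_0$ (i.e. $\int^{x_0}W(t)\phi(t)^{-2}\,dt$ diverges) if and only if $\phi(x)\sim c\,\phi_2(x)$ as $x\to x_0$ for some constant $c\neq0$; and it is canonical of type (II) at $x_0$ (i.e. $\int^{x_0}W(t)\phi(t)^{-2}\,dt$ converges) if and only if $\phi(x)\sim c\,\phi_1(x)$ as $x\to x_0$ for some constant $c\neq0$. Moreover $\phi(x)\sim c\,\phi_2(x)$ as $x\to x_0$ occurs if and only if $\phi\equiv c\,\phi_2$ on $I$; hence on a fixed left-sided neighborhood of $x_0$ there is, up to constant factors, only one canonical factorization of type (I) at $x_0$.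
   Context: $AC^1(I)$: $C^1$ functions on $I$ whose derivative is absolutely continuous on every compact subinterval of $I$. $W(g,h;x):=g(x)h'(x)-g'(x)h(x)$. $L$ is the unique operator $L[u]=u''+a_1(x)u'+a_2(x)u$ with locally integrable coefficients whose kernel is $\mathrm{span}(\phi_1,\phi_2)$. A factorization $L[u]=p_2[p_1(p_0u)']'$ with nowhere-vanishing $p_i$ is called canonical of type (I), resp. type (II), at $x_0$ according as $\int^{x_0}1/p_1$ diverges, resp. converges; in the displayed factorization $p_1=\phi^2/W$. Limits are as $x\to x_0^-$. *)

(* Defs.v *)
From Stdlib Require Import Reals.
From Coquelicot Require Import Coquelicot.
Open Scope R_scope.

Definition Ivl (T : R) (x0 : Rbar) (x : R) : Prop := T <= x /\ Rbar_lt x x0.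

Definition at_left_Rbar (x0 : Rbar) : (R -> Prop) -> Prop :=
  match x0 with
  | Finite r => at_left r
  | _ => Rbar_locally x0
  end.

Fixpoint sumR (f : nat -> R) (n : nat) : R :=
  match n with O => 0 | S k => sumR f k + f k end.

Definition abs_cont_on (g : R -> R) (c d : R) : Prop :=
  forall eps, 0 < eps -> exists delta, 0 < delta /\
    forall (n : nat) (u v : nat -> R),
      (forall i, (i < n)%nat -> c <= u i /\ u i <= v i /\ v i <= d) ->
      (forall i j, (i < j)%nat -> (j < n)%nat -> v i <= u j) ->
      sumR (fun i => v i - u i) n < delta ->
      sumR (fun i => Rabs (g (v i) - g (u i))) n < eps.

(* df is the derivative of f at x, relative to the set D (one-sided at endpoints) *)
Definition derive_within (D : R -> Prop) (f df : R -> R) (x : R) : Prop :=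
  filterlim (fun y => (f y - f x) / (y - x))
            (within (fun y => D y /\ y <> x) (locally x)) (locally (df x)).

Definition AC1 (D : R -> Prop) (f df : R -> R) : Prop :=
  (forall x, D x -> derive_within D f df x) /\
  (forall x, D x -> filterlim df (within D (locally x)) (locally (df x))) /\
  (forall c d, D c -> D d -> c <= d -> abs_cont_on df c d).

Definition Wr (g dg h dh : R -> R) (x : R) : R := g x * dh x - dg x * h x.

Definition asymp_equiv (x0 : Rbar) (f g : R -> R) : Prop :=
  filterlim (fun x => f x / g x) (at_left_Rbar x0) (locally 1).

Definition little_o (x0 : Rbar) (f g : R -> R) : Prop :=
  filterlim (fun x => f x / g x) (at_left_Rbar x0) (locally 0).

Definition improper_conv (f : R -> R) (a : R) (x0 : Rbar) : Prop :=
  exists l : R, filterlim (fun x => RInt f a x) (at_left_Rbar x0) (locally l).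

(* Factorization with p1 = phi^2 / W on J = [a, x0):
   type (I) iff int^{x0} 1/p1 = int^{x0} W/phi^2 diverges, type (II) iff converges. *)
Definition canonical_typeI (W phi : R -> R) (a : R) (x0 : Rbar) : Prop :=
  ~ improper_conv (fun t => W t / (phi t) ^ 2) a x0.
Definition canonical_typeII (W phi : R -> R) (a : R) (x0 : Rbar) : Prop :=
  improper_conv (fun t => W t / (phi t) ^ 2) a x0.

(* Main.v *)
Require Import Defs.
From Stdlib Require Import Reals Lra.
From Coquelicot Require Import Coquelicot.
Open Scope R_scope.

Lemma alR_proper (x0 : Rbar) : ProperFilter (at_left_Rbar x0).
Proof. destruct x0; simpl; [apply at_left_proper_filter | apply Rbar_locally_filter | apply Rbar_locally_filter]. Qed.
#[global] Existing Instance alR_proper.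
Lemma alR_filter (x0 : Rbar) : Filter (at_left_Rbar x0).
Proof. apply alR_proper. Qed.
#[global] Existing Instance alR_filter.

Section L.
Context {T : Type} {F : (T -> Prop) -> Prop} {FF : Filter F}.
Lemma lim_plus (f g : T -> R) a b : filterlim f F (locally a) -> filterlim g F (locally b) ->
  filterlim (fun x => f x + g x) F (locally (a + b)).
Proof. intros Hf Hg. apply (filterlim_comp_2 f g Rplus Hf Hg (filterlim_plus a b)). Qed.
Lemma lim_mult (f g : T -> R) a b : filterlim f F (locally a) -> filterlim g F (locally b) ->
  filterlim (fun x => f x * g x) F (locally (a * b)).
Proof. intros Hf Hg. apply (filterlim_comp_2 f g Rmult Hf Hg (filterlim_mult a b)). Qed.
Lemma lim_inv (f : T -> R) a : a <> 0 -> filterlim f F (locally a) ->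
  filterlim (fun x => / f x) F (locally (/ a)).
Proof. intros Ha Hf. apply (filterlim_comp _ _ _ f Rinv F (locally a) _ Hf).
  apply (continuous_Rinv a Ha). Qed.
Lemma lim_const (c : R) : filterlim (fun _ : T => c) F (locally c).
Proof. apply filterlim_const. Qed.
End L.
Lemma dw_eps D f df y : derive_within D f df y -> forall eps, 0 < eps -> exists d, 0 < d /\
  forall z, D z -> z <> y -> Rabs (z - y) < d -> Rabs ((f z - f y)/(z - y) - df y) < eps.
Proof.
  intros H eps He. specialize (H (ball (df y) eps) (locally_ball (df y) (mkposreal eps He))).
  destruct H as [d Hd]. exists d. split; [apply cond_pos|].
  intros z Dz Nz Hz. apply (Hd z); [exact Hz | split; assumption].
Qed.

Lemma cw_eps D df y : filterlim df (within D (locally y)) (locally (df y)) -> forall eps, 0 < eps -> exists d, 0 < d /\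
  forall z, D z -> Rabs (z - y) < d -> Rabs (df z - df y) < eps.
Proof.
  intros H eps He. specialize (H (ball (df y) eps) (locally_ball (df y) (mkposreal eps He))).
  destruct H as [d Hd]. exists d. split; [apply cond_pos|].
  intros z Dz Hz. apply (Hd z); [exact Hz | assumption].
Qed.

Lemma rbar_room (y : R) (x0 : Rbar) : Rbar_lt y x0 -> exists d, 0 < d /\ forall z, z < y + d -> Rbar_lt z x0.
Proof.
  destruct x0 as [r| |]; intros H; simpl in H |- *.
  - exists (r - y). split; [lra|]. intros z Hz. simpl. lra.
  - exists 1. split; [lra|]. intros; exact I.
  - destruct H.
Qed.

Definition Ext (f df : R -> R) (a y : R) : R :=
  if Rle_dec a y then f y else f a + df a * (y - a).
Definition dExt (df : R -> R) (a y : R) : R := df (Rmax a y).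

Lemma ext_deriv (T : R) (x0 : Rbar) f df a y :
  (forall x, Ivl T x0 x -> derive_within (Ivl T x0) f df x) ->
  T <= a -> a <= y -> Rbar_lt y x0 ->
  is_derive (Ext f df a) y (dExt df a y).
Proof.
  intros Hd Ta ay yx. apply is_derive_Reals. intros eps He.
  assert (Dy : Ivl T x0 y) by (split; [lra|exact yx]).
  destruct (dw_eps _ _ _ _ (Hd y Dy) eps He) as [d1 [Hd1 H1]].
  destruct (rbar_room y x0 yx) as [d2 [Hd2 H2]].
  unfold dExt. rewrite Rmax_right by lra.
  assert (Hfy : Ext f df a y = f y) by (unfold Ext; destruct (Rle_dec a y); [reflexivity|lra]).
  destruct (Req_dec y a) as [Eya|Nya].
  - assert (Hdel : 0 < Rmin d1 d2) by (apply Rmin_glb_lt; lra).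
    exists (mkposreal _ Hdel). intros h hn hl. simpl in hl.
    assert (hl1 : Rabs h < d1) by (eapply Rlt_le_trans; [exact hl| apply Rmin_l]).
    assert (hl2 : Rabs h < d2) by (eapply Rlt_le_trans; [exact hl| apply Rmin_r]).
    rewrite Hfy. unfold Ext. destruct (Rle_dec a (y + h)) as [L|L].
    + replace h with (y + h - y) at 2 by ring.
      apply H1; [split; [lra| apply H2; apply Rabs_def2 in hl2; lra] | lra |].
      replace (y + h - y) with h by ring. exact hl1.
    + subst y. replace ((f a + df a * (a + h - a) - f a) / h - df a) with 0 by (field; exact hn).
      rewrite Rabs_R0. exact He.
  - assert (Hdel : 0 < Rmin (Rmin d1 d2) (y - a)) by (apply Rmin_glb_lt; [apply Rmin_glb_lt|]; lra).
    exists (mkposreal _ Hdel). intros h hn hl. simpl in hl.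
    assert (hl1 : Rabs h < d1) by (eapply Rlt_le_trans; [exact hl| eapply Rle_trans; [apply Rmin_l|apply Rmin_l]]).
    assert (hl2 : Rabs h < d2) by (eapply Rlt_le_trans; [exact hl| eapply Rle_trans; [apply Rmin_l|apply Rmin_r]]).
    assert (hl3 : Rabs h < y - a) by (eapply Rlt_le_trans; [exact hl| apply Rmin_r]).
    apply Rabs_def2 in hl3. apply Rabs_def2 in hl2 as hl2'.
    rewrite Hfy. unfold Ext. destruct (Rle_dec a (y + h)) as [L|L]; [|lra].
    replace h with (y + h - y) at 2 by ring.
    apply H1; [split; [lra| apply H2; lra] | lra |].
    replace (y + h - y) with h by ring. exact hl1.
Qed.

Lemma ext_cont (T : R) (x0 : Rbar) df a y :
  (forall x, Ivl T x0 x -> filterlim df (within (Ivl T x0) (locally x)) (locally (df x))) ->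
  T <= a -> a <= y -> Rbar_lt y x0 ->
  continuous (dExt df a) y.
Proof.
  intros Hc Ta ay yx. apply continuity_pt_filterlim.
  unfold continuity_pt, continue_in, limit1_in, limit_in. simpl. unfold R_dist.
  intros eps He.
  assert (Dy : Ivl T x0 y) by (split; [lra|exact yx]).
  destruct (cw_eps _ _ _ (Hc y Dy) eps He) as [d1 [Hd1 H1]].
  destruct (rbar_room y x0 yx) as [d2 [Hd2 H2]].
  exists (Rmin d1 d2). split; [apply Rmin_glb_lt; lra|].
  intros z [_ Hz].
  assert (hl1 : Rabs (z - y) < d1) by (eapply Rlt_le_trans; [exact Hz| apply Rmin_l]).
  assert (hl2 : Rabs (z - y) < d2) by (eapply Rlt_le_trans; [exact Hz| apply Rmin_r]).
  apply Rabs_def2 in hl2.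
  unfold dExt. rewrite (Rmax_right a y) by lra.
  apply H1.
  - split; [apply Rle_trans with a; [lra|apply Rmax_l]|].
    apply H2. unfold Rmax; destruct (Rle_dec a z); lra.
  - unfold Rmax; destruct (Rle_dec a z) as [L|L]; [exact hl1|].
    apply Rabs_def2 in hl1. rewrite Rabs_minus_sym, Rabs_pos_eq; lra.
Qed.
Lemma cR_mult (f g : R -> R) x : continuous f x -> continuous g x -> continuous (fun y => f y * g y) x.
Proof. intros; apply (@continuous_mult R_UniformSpace R_AbsRing f g x); assumption. Qed.
Lemma cR_plus (f g : R -> R) x : continuous f x -> continuous g x -> continuous (fun y => f y + g y) x.
Proof. intros; apply (@continuous_plus R_UniformSpace R_AbsRing R_NormedModule f g x); assumption. Qed.
Lemma cR_minus (f g : R -> R) x : continuous f x -> continuous g x -> continuous (fun y => f y - g y) x.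
Proof. intros; apply (@continuous_minus R_UniformSpace R_AbsRing R_NormedModule f g x); assumption. Qed.
Lemma cR_const (c : R) x : continuous (fun _ : R => c) x.
Proof. apply continuous_const. Qed.
Lemma cR_inv (f : R -> R) x : continuous f x -> f x <> 0 -> continuous (fun y => / f y) x.
Proof. intros; apply continuous_Rinv_comp; assumption. Qed.

Lemma dR_plus f g x df dg : is_derive f x df -> is_derive g x dg -> is_derive (fun y => f y + g y) x (df + dg).
Proof. intros; apply (@is_derive_plus R_AbsRing R_NormedModule f g x df dg); assumption. Qed.

Lemma ftc_lemma (x0 : Rbar) (T : R) (phi1 dphi1 phi2 dphi2 : R -> R) (alpha beta u v a x : R) :
  AC1 (Ivl T x0) phi1 dphi1 -> AC1 (Ivl T x0) phi2 dphi2 ->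
  T <= a -> (forall x, a <= x -> Rbar_lt x x0 -> 0 < alpha * phi1 x + beta * phi2 x) ->
  a <= x -> Rbar_lt x x0 -> alpha * v - beta * u <> 0 ->
  RInt (fun t => Wr phi1 dphi1 phi2 dphi2 t / (alpha * phi1 t + beta * phi2 t) ^ 2) a x =
  ((u * phi1 x + v * phi2 x) / (alpha * phi1 x + beta * phi2 x)
   - (u * phi1 a + v * phi2 a) / (alpha * phi1 a + beta * phi2 a)) / (alpha * v - beta * u).
Proof.
  intros [D1 [C1 _]] [D2 [C2 _]] Ta Hpos ax xx0 Hk.
  set (k := alpha * v - beta * u).
  set (E1 := Ext phi1 dphi1 a). set (E2 := Ext phi2 dphi2 a).
  set (e1 := dExt dphi1 a). set (e2 := dExt dphi2 a).
  set (P := fun t => alpha * E1 t + beta * E2 t).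
  set (Hh := fun t => u * E1 t + v * E2 t).
  set (K := fun t => k * (E1 t * e2 t - e1 t * E2 t) * / (P t * P t)).
  assert (Hin : forall t, a <= t <= x -> a <= t /\ Rbar_lt t x0).
  { intros t Ht. split; [lra|]. destruct x0 as [r| |]; simpl in *; try lra; auto. }
  assert (EE1 : forall t, a <= t -> E1 t = phi1 t) by (intros t Ht; unfold E1, Ext; destruct (Rle_dec a t); [reflexivity|lra]).
  assert (EE2 : forall t, a <= t -> E2 t = phi2 t) by (intros t Ht; unfold E2, Ext; destruct (Rle_dec a t); [reflexivity|lra]).
  assert (Ee1 : forall t, a <= t -> e1 t = dphi1 t) by (intros t Ht; unfold e1, dExt; rewrite Rmax_right; lra).
  assert (Ee2 : forall t, a <= t -> e2 t = dphi2 t) by (intros t Ht; unfold e2, dExt; rewrite Rmax_right; lra).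
  assert (Pp : forall t, a <= t <= x -> P t <> 0).
  { intros t Ht. destruct (Hin t Ht) as [h1 h2]. unfold P. rewrite EE1, EE2 by lra.
    specialize (Hpos t h1 h2). lra. }
  assert (HI : is_RInt K a x (minus (Hh x / P x) (Hh a / P a))).
  { apply (is_RInt_derive (fun t => Hh t / P t) K).
    - intros t Ht. rewrite Rmin_left, Rmax_right in Ht by lra.
      destruct (Hin t Ht) as [h1 h2].
      assert (d1 := ext_deriv T x0 phi1 dphi1 a t D1 Ta h1 h2).
      assert (d2 := ext_deriv T x0 phi2 dphi2 a t D2 Ta h1 h2).
      fold E1 e1 in d1. fold E2 e2 in d2.
      assert (dH : is_derive Hh t (u * e1 t + v * e2 t)).
      { apply dR_plus; apply is_derive_scal; assumption. }
      assert (dP : is_derive P t (alpha * e1 t + beta * e2 t)).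
      { apply dR_plus; apply is_derive_scal; assumption. }
      assert (Hd := is_derive_div Hh P t _ _ dH dP (Pp t Ht)).
      replace (K t) with (((u * e1 t + v * e2 t) * P t - Hh t * (alpha * e1 t + beta * e2 t)) / P t ^ 2).
      exact Hd. unfold K, Hh, P, k. field. apply (Pp t Ht).
    - intros t Ht. rewrite Rmin_left, Rmax_right in Ht by lra.
      destruct (Hin t Ht) as [h1 h2].
      assert (c1 := ex_derive_continuous _ _ (ex_intro _ _ (ext_deriv T x0 phi1 dphi1 a t D1 Ta h1 h2))).
      assert (c2 := ex_derive_continuous _ _ (ex_intro _ _ (ext_deriv T x0 phi2 dphi2 a t D2 Ta h1 h2))).
      assert (c3 := ext_cont T x0 dphi1 a t C1 Ta h1 h2).
      assert (c4 := ext_cont T x0 dphi2 a t C2 Ta h1 h2).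
      fold E1 in c1. fold E2 in c2. fold e1 in c3. fold e2 in c4.
      assert (cP : continuous P t).
      { unfold P. apply cR_plus; apply cR_mult; auto; apply cR_const. }
      unfold K. apply cR_mult; [apply cR_mult; [apply cR_const|] |].
      + apply cR_minus; apply cR_mult; auto.
      + apply cR_inv; [apply cR_mult; auto|]. apply Rmult_integral_contrapositive; split; apply (Pp t Ht). }
  apply is_RInt_scal with (k := / k) in HI.
  apply is_RInt_unique.
  replace (((u * phi1 x + v * phi2 x) / (alpha * phi1 x + beta * phi2 x)
   - (u * phi1 a + v * phi2 a) / (alpha * phi1 a + beta * phi2 a)) / k)
   with (scal (/ k) (minus (Hh x / P x) (Hh a / P a))).
  2:{ unfold Hh, P. rewrite EE1, EE2, EE1, EE2 by lra. unfold scal, minus, plus, opp; simpl.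
      unfold mult; simpl. field.
      destruct (Hin a) as [_ ha]; [lra|]. destruct (Hin x) as [_ hx]; [lra|].
      assert (pa := Hpos a (Rle_refl a) ha). assert (px := Hpos x ax hx).
      split; [intro Hc; lra|split; [intro Hc; lra|exact Hk]]. }
  eapply is_RInt_ext; [|exact HI].
  intros t Ht. rewrite Rmin_left, Rmax_right in Ht by lra.
  unfold scal; simpl; unfold mult; simpl. unfold K, P, Wr.
  rewrite EE1, EE2, Ee1, Ee2 by lra. unfold k. field.
  assert (Pt := Pp t ltac:(lra)). unfold P in Pt. rewrite EE1, EE2 in Pt by lra.
  split; assumption.
Qed.

Lemma ev_J (x0 : Rbar) (a : R) : Rbar_lt a x0 -> at_left_Rbar x0 (fun x => a <= x /\ Rbar_lt x x0).
Proof.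
  destruct x0 as [r| |]; intros H; simpl in H.
  - simpl. unfold at_left, within. assert (Hp : 0 < r - a) by lra.
    exists (mkposreal _ Hp). intros y Hy Hl. simpl in Hy. destruct (Rabs_def2 _ _ Hy).
    unfold minus, plus, opp in *; simpl in *. lra.
  - simpl. exists a. intros y Hy. simpl. lra.
  - destruct H.
Qed.

Section Main.
Variables (x0 : Rbar) (T : R) (phi1 dphi1 phi2 dphi2 : R -> R) (a : R).
Hypotheses (HT : Rbar_lt T x0) (A1 : AC1 (Ivl T x0) phi1 dphi1) (A2 : AC1 (Ivl T x0) phi2 dphi2)
  (Ho : little_o x0 phi2 phi1) (N1 : forall x, Ivl T x0 x -> phi1 x <> 0)
  (N2 : forall x, Ivl T x0 x -> phi2 x <> 0) (Ta : T <= a) (ax0 : Rbar_lt a x0).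

Let F := at_left_Rbar x0.
Let q := fun x => phi2 x / phi1 x.

Lemma evI : F (fun x => a <= x /\ Rbar_lt x x0 /\ phi1 x <> 0 /\ phi2 x <> 0).
Proof.
  apply (filter_imp (fun x => a <= x /\ Rbar_lt x x0)); [|apply ev_J; exact ax0].
  intros x [h1 h2]. assert (D : Ivl T x0 x) by (split; [lra|exact h2]).
  repeat split; auto.
Qed.

Lemma conv_of_alpha alpha beta :
  (forall x, a <= x -> Rbar_lt x x0 -> 0 < alpha * phi1 x + beta * phi2 x) -> alpha <> 0 ->
  canonical_typeII (Wr phi1 dphi1 phi2 dphi2) (fun x => alpha * phi1 x + beta * phi2 x) a x0.
Proof.
  intros Hpos Ha. unfold canonical_typeII, improper_conv.
  set (C := (0 * phi1 a + 1 * phi2 a) / (alpha * phi1 a + beta * phi2 a)).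
  exists ((0 - C) * / (alpha * 1 - beta * 0)).
  assert (Hq : filterlim q F (locally 0)) by exact Ho.
  assert (L1 : filterlim (fun x => q x * / (alpha + beta * q x)) F (locally (0 * / (alpha + beta * 0)))).
  { apply lim_mult; [exact Hq|]. apply lim_inv; [lra|]. apply lim_plus; [apply lim_const|].
    apply lim_mult; [apply lim_const|exact Hq]. }
  replace (0 * / (alpha + beta * 0)) with 0 in L1 by (field; exact Ha).
  assert (L2 := lim_mult _ _ _ _ (lim_plus _ _ _ _ L1 (lim_const (- C))) (lim_const (/ (alpha * 1 - beta * 0)))).
  replace (0 + - C) with (0 - C) in L2 by ring.
  eapply filterlim_ext_loc; [|exact L2].
  eapply filter_imp; [|exact evI]. intros x [h1 [h2 [h3 h4]]].
  rewrite (ftc_lemma x0 T phi1 dphi1 phi2 dphi2 alpha beta 0 1 a x A1 A2 Ta Hpos h1 h2) by lra.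
  unfold q, C. match goal with |- ?l = ?r => change (@eq R l r) end.
  assert (P := Hpos x h1 h2). assert (Pa := Hpos a (Rle_refl a) ax0).
  field. repeat split; try (intro Hc; lra); auto.
Qed.

Lemma uniqF (f : R -> R) l1 l2 : filterlim f F (locally l1) -> filterlim f F (locally l2) -> l1 = l2.
Proof.
  intros H1 H2. apply (@filterlim_locally_unique R R_AbsRing R_NormedModule F _ f l1 l2 H1 H2).
Qed.

Lemma Hq : filterlim q F (locally 0).
Proof. exact Ho. Qed.

Lemma equiv_of_alpha alpha beta : alpha <> 0 ->
  asymp_equiv x0 (fun x => alpha * phi1 x + beta * phi2 x) (fun x => alpha * phi1 x).
Proof.
  intros Ha. unfold asymp_equiv.
  assert (L := lim_mult _ _ _ _ (lim_plus _ _ _ _ (lim_const alpha) (lim_mult _ _ _ _ (lim_const beta) Hq)) (lim_const (/ alpha))).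
  replace ((alpha + beta * 0) * / alpha) with 1 in L by (field; exact Ha).
  eapply filterlim_ext_loc; [|exact L].
  eapply filter_imp; [|exact evI]. intros x [h1 [h2 [h3 h4]]].
  unfold q. match goal with |- ?l = ?r => change (@eq R l r) end. field. auto.
Qed.

Lemma div_alpha0 beta : (forall x, a <= x -> Rbar_lt x x0 -> 0 < 0 * phi1 x + beta * phi2 x) ->
  canonical_typeI (Wr phi1 dphi1 phi2 dphi2) (fun x => 0 * phi1 x + beta * phi2 x) a x0.
Proof.
  intros Hpos [l Hl].
  assert (Pa := Hpos a (Rle_refl a) ax0).
  assert (Hb : beta <> 0) by (intro Hc; rewrite Hc in Pa; lra).
  set (C := (1 * phi1 a + 0 * phi2 a) / (0 * phi1 a + beta * phi2 a)).
  set (k := 0 * 0 - beta * 1).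
  set (G := fun x => RInt (fun t => Wr phi1 dphi1 phi2 dphi2 t / (0 * phi1 t + beta * phi2 t) ^ 2) a x).
  assert (L := lim_mult _ _ _ _ Hq (lim_plus _ _ _ _ (lim_const C) (lim_mult _ _ _ _ (lim_const k) Hl))).
  assert (L2 : filterlim (fun x : R => / beta) F (locally (0 * (C + k * l)))).
  { eapply filterlim_ext_loc; [|exact L].
    eapply filter_imp; [|exact evI]. intros x [h1 [h2 [h3 h4]]].
    rewrite (ftc_lemma x0 T phi1 dphi1 phi2 dphi2 0 beta 1 0 a x A1 A2 Ta Hpos h1 h2) by (unfold k in *; lra).
    assert (P := Hpos x h1 h2).
    unfold q, C, k. match goal with |- ?l = ?r => change (@eq R l r) end. assert (Na := N2 a (conj Ta ax0)). field.
    repeat split; try (intro Hc; lra); auto. }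
  assert (E := uniqF _ _ _ L2 (lim_const (/ beta))).
  apply (Rinv_neq_0_compat beta Hb). rewrite <- E. ring.
Qed.

Lemma alpha0_of_equiv2 alpha beta c : c <> 0 ->
  asymp_equiv x0 (fun x => alpha * phi1 x + beta * phi2 x) (fun x => c * phi2 x) -> alpha = 0.
Proof.
  intros Hc Hr. unfold asymp_equiv in Hr.
  assert (L := lim_mult _ _ _ _ Hq Hr).
  assert (L2 := lim_plus _ _ _ _ (lim_const (alpha / c)) (lim_mult _ _ _ _ (lim_const (beta / c)) Hq)).
  assert (L3 : filterlim (fun x => q x * ((alpha * phi1 x + beta * phi2 x) / (c * phi2 x))) F
                 (locally (alpha / c + beta / c * 0))).
  { eapply filterlim_ext_loc; [|exact L2].
    eapply filter_imp; [|exact evI]. intros x [h1 [h2 [h3 h4]]].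
    unfold q. match goal with |- ?l = ?r => change (@eq R l r) end. field. auto. }
  assert (E := uniqF _ _ _ L L3).
  replace alpha with ((alpha / c + beta / c * 0) * c) by (field; exact Hc).
  rewrite <- E. ring.
Qed.

Lemma alpha_of_equiv1 alpha beta c : c <> 0 ->
  asymp_equiv x0 (fun x => alpha * phi1 x + beta * phi2 x) (fun x => c * phi1 x) -> alpha = c.
Proof.
  intros Hc Hr. unfold asymp_equiv in Hr.
  assert (L2 := lim_plus _ _ _ _ (lim_const (alpha / c)) (lim_mult _ _ _ _ (lim_const (beta / c)) Hq)).
  assert (L3 : filterlim (fun x => (alpha * phi1 x + beta * phi2 x) / (c * phi1 x)) F
                 (locally (alpha / c + beta / c * 0))).
  { eapply filterlim_ext_loc; [|exact L2].
    eapply filter_imp; [|exact evI]. intros x [h1 [h2 [h3 h4]]].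
    unfold q. match goal with |- ?l = ?r => change (@eq R l r) end. field. auto. }
  assert (E := uniqF _ _ _ Hr L3).
  replace alpha with ((alpha / c + beta / c * 0) * c) by (field; exact Hc).
  rewrite <- E. ring.
Qed.

Lemma equiv2_of_alpha0 beta : beta <> 0 ->
  asymp_equiv x0 (fun x => 0 * phi1 x + beta * phi2 x) (fun x => beta * phi2 x).
Proof.
  intros Hb. unfold asymp_equiv. eapply filterlim_ext_loc; [|apply (lim_const 1)].
  eapply filter_imp; [|exact evI]. intros x [h1 [h2 [h3 h4]]].
  match goal with |- ?l = ?r => change (@eq R l r) end. field. auto.
Qed.

Lemma eq_of_equiv2 beta c : c <> 0 ->
  asymp_equiv x0 (fun x => 0 * phi1 x + beta * phi2 x) (fun x => c * phi2 x) -> beta = c.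
Proof.
  intros Hc Hr. unfold asymp_equiv in Hr.
  assert (L : filterlim (fun x => (0 * phi1 x + beta * phi2 x) / (c * phi2 x)) F (locally (beta / c))).
  { eapply filterlim_ext_loc; [|apply (lim_const (beta / c))].
    eapply filter_imp; [|exact evI]. intros x [h1 [h2 [h3 h4]]].
    match goal with |- ?l = ?r => change (@eq R l r) end. field. auto. }
  assert (E := uniqF _ _ _ L Hr).
  replace beta with ((beta / c) * c) by (field; exact Hc). rewrite E. ring.
Qed.

Lemma equiv_of_eq alpha beta c : c <> 0 ->
  (forall x, Ivl T x0 x -> alpha * phi1 x + beta * phi2 x = c * phi2 x) ->
  asymp_equiv x0 (fun x => alpha * phi1 x + beta * phi2 x) (fun x => c * phi2 x).
Proof.
  intros Hc He. unfold asymp_equiv. eapply filterlim_ext_loc; [|apply (lim_const 1)].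
  eapply filter_imp; [|exact evI]. intros x [h1 [h2 [h3 h4]]].
  rewrite He by (split; [lra|exact h2]).
  match goal with |- ?l = ?r => change (@eq R l r) end. field. auto.
Qed.
End Main.

Theorem lemma3p2 (x0 : Rbar) (T : R)
  (phi1 dphi1 phi2 dphi2 : R -> R) (alpha beta a : R) :
  Rbar_lt T x0 ->
  AC1 (Ivl T x0) phi1 dphi1 ->
  AC1 (Ivl T x0) phi2 dphi2 ->
  little_o x0 phi2 phi1 ->
  (forall x, Ivl T x0 x -> phi1 x <> 0) ->
  (forall x, Ivl T x0 x -> phi2 x <> 0) ->
  (forall x, Ivl T x0 x -> Wr phi1 dphi1 phi2 dphi2 x <> 0) ->
  (* J = [a, x0) is a left-sided neighbourhood of x0 inside I *)
  T <= a -> Rbar_lt a x0 ->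
  (forall x, a <= x -> Rbar_lt x x0 -> 0 < alpha * phi1 x + beta * phi2 x) ->
  let W := Wr phi1 dphi1 phi2 dphi2 in
  let phi := fun x => alpha * phi1 x + beta * phi2 x in
  (canonical_typeI W phi a x0 <->
     exists c, c <> 0 /\ asymp_equiv x0 phi (fun x => c * phi2 x)) /\
  (canonical_typeII W phi a x0 <->
     exists c, c <> 0 /\ asymp_equiv x0 phi (fun x => c * phi1 x)) /\
  (forall c, c <> 0 ->
     (asymp_equiv x0 phi (fun x => c * phi2 x) <->
      forall x, Ivl T x0 x -> phi x = c * phi2 x)) /\
  (* uniqueness up to constant factors of the type (I) factorization on J *)
  (forall alpha' beta' : R,
     let psi := fun x => alpha' * phi1 x + beta' * phi2 x in
     (forall x, a <= x -> Rbar_lt x x0 -> 0 < psi x) ->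
     canonical_typeI W phi a x0 -> canonical_typeI W psi a x0 ->
     exists k, k <> 0 /\ forall x, a <= x -> Rbar_lt x x0 -> psi x = k * phi x).
Proof.
  intros HT A1 A2 Ho N1 N2 NW Ta ax0 Hpos W phi.
  assert (Na1 := N1 a (conj Ta ax0)). assert (Na2 := N2 a (conj Ta ax0)).
  assert (TI : forall al be, (forall x, a <= x -> Rbar_lt x x0 -> 0 < al * phi1 x + be * phi2 x) ->
     canonical_typeI W (fun x => al * phi1 x + be * phi2 x) a x0 -> al = 0).
  { intros al be Hp HI. destruct (Req_dec al 0) as [E|E]; [exact E|].
    exfalso. apply HI. exact (conv_of_alpha x0 T phi1 dphi1 phi2 dphi2 a A1 A2 Ho N1 N2 Ta ax0 al be Hp E). }
  assert (Tb : forall al be, (forall x, a <= x -> Rbar_lt x x0 -> 0 < al * phi1 x + be * phi2 x) ->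
     al = 0 -> be <> 0).
  { intros al be Hp E Hb. assert (P := Hp a (Rle_refl a) ax0). rewrite E, Hb in P. lra. }
  split; [|split; [|split]].
  - split.
    + intros HI. assert (E := TI _ _ Hpos HI). assert (Hb := Tb _ _ Hpos E).
      exists beta. split; [exact Hb|]. unfold phi. rewrite E.
      exact (equiv2_of_alpha0 x0 T phi1 phi2 a N1 N2 Ta ax0 beta Hb).
    + intros [c [Hc He]]. assert (E := alpha0_of_equiv2 x0 T phi1 phi2 a Ho N1 N2 Ta ax0 alpha beta c Hc He).
      unfold phi. subst alpha. exact (div_alpha0 x0 T phi1 dphi1 phi2 dphi2 a A1 A2 Ho N1 N2 Ta ax0 beta Hpos).
  - split.
    + intros HII. destruct (Req_dec alpha 0) as [E|E].
      * exfalso. subst alpha. exact (div_alpha0 x0 T phi1 dphi1 phi2 dphi2 a A1 A2 Ho N1 N2 Ta ax0 beta Hpos HII).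
      * exists alpha. split; [exact E|]. exact (equiv_of_alpha x0 T phi1 phi2 a Ho N1 N2 Ta ax0 alpha beta E).
    + intros [c [Hc He]]. assert (E := alpha_of_equiv1 x0 T phi1 phi2 a Ho N1 N2 Ta ax0 alpha beta c Hc He).
      subst c. exact (conv_of_alpha x0 T phi1 dphi1 phi2 dphi2 a A1 A2 Ho N1 N2 Ta ax0 alpha beta Hpos Hc).
  - intros c Hc. split.
    + intros He. assert (E := alpha0_of_equiv2 x0 T phi1 phi2 a Ho N1 N2 Ta ax0 alpha beta c Hc He).
      unfold phi in He |- *. subst alpha.
      assert (E2 := eq_of_equiv2 x0 T phi1 phi2 a N1 N2 Ta ax0 beta c Hc He).
      intros x _. subst beta. ring.
    + intros He. exact (equiv_of_eq x0 T phi1 phi2 a N1 N2 Ta ax0 alpha beta c Hc He).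
  - intros al' be' psi Hp HIphi HIpsi.
    assert (E := TI _ _ Hpos HIphi). assert (Hb := Tb _ _ Hpos E).
    assert (E' := TI _ _ Hp HIpsi). assert (Hb' := Tb _ _ Hp E').
    exists (be' / beta). split.
    + intro Hc. apply Hb'. replace be' with ((be' / beta) * beta) by (field; exact Hb). rewrite Hc. ring.
    + intros x _ _. unfold psi, phi. rewrite E, E'. field. exact Hb.
Qed.
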